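(* Let $p\in(\tfrac12,1)$, $n\ge1$, $B\in\{1,\dots,n\}$. For $\lambda\in[0,1]$ let $\sigma^\lambda$ be the symmetric strategy profile of the crowdfunding game $\Gamma(B,n)$ in which every player plays action $1$ with probability $1$ after signal $H$ and with probability $\lambda$ after signal $L$. For a fixed player $i$, let $x^\lambda=\Pr_{\sigma^\lambda}(\sum_{j\ne i}a_j\ge B-1\mid\omega=H)$ and $y^\lambda=\Pr_{\sigma^\lambda}(\sum_{j\ne i}a_j\ge B-1\mid\omega=L)$. If $(1-p)x^{\lambda'}-py^{\lambda'}=0$ for some $\lambda'\in(0,1)$, then $(1-p)x^{\lambda}-py^{\lambda}>0$ for all $\lambda\in[0,\lambda')$ and $(1-p)x^{\lambda}-py^{\lambda}<0$ for all $\lambda\in(\lambda',1]$.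
   Context: The crowdfunding game $\Gamma(B,n)$ with parameter $p\in(\tfrac12,1)$: there are $n$ players and a threshold $B\in\{1,\dots,n\}$. A state $\omega\in\{H,L\}$ is drawn with probability $\tfrac12$ each. Conditional on $\omega$, each player $i$ independently receives a signal $s_i\in\{H,L\}$ with $\Pr(s_i=\omega\mid\omega)=p$. Players simultaneously choose $a_i\in\{0,1\}$. Under a profile where each player independently plays $1$ with the stated signal-dependent probabilities, conditional on $\omega$ the other players' actions are i.i.d.; in particular under $\sigma^\lambda$, conditional on $\omega=H$ each other player plays $1$ with probability $p+(1-p)\lambda$, and conditional on $\omega=L$ with probability $(1-p)+p\lambda$. *)

(* Defs.v *)
From HB Require Import structures.
From mathcomp Require Import all_boot all_order all_algebra.
From mathcomp Require Import reals.
Set Implicit Arguments. Unset Strict Implicit. Unset Printing Implicit Defensive.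
Import Order.TTheory GRing.Theory Num.Theory.
Local Open Scope ring_scope.

(* Pr(Bin(m, q) >= k): probability that at least k of m i.i.d. players,
   each playing 1 with probability q, play 1. *)
Definition binom_tail (R : realType) (m k : nat) (q : R) : R :=
  \sum_(k <= j < m.+1) ('C(m, j))%:R * q ^+ j * (1 - q) ^+ (m - j).

(* Under sigma^lambda, conditional on omega = H each other player plays 1
   w.p. p + (1-p) lambda; there are n-1 other players; threshold B-1. *)
Definition xlam (R : realType) (p : R) (n B : nat) (lam : R) : R :=
  binom_tail (n - 1) (B - 1) (p + (1 - p) * lam).

(* conditional on omega = L: each other player plays 1 w.p. (1-p) + p lambda *)
Definition ylam (R : realType) (p : R) (n B : nat) (lam : R) : R :=
  binom_tail (n - 1) (B - 1) ((1 - p) + p * lam).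

(* Main.v *)
Require Import Defs.
From HB Require Import structures.
From mathcomp Require Import all_boot all_order all_algebra.
From mathcomp Require Import reals.
From mathcomp Require Import ring lra zify.
From mathcomp Require Import classical_sets boolp functions topology normedtype derive realfun.
Import Order.TTheory GRing.Theory Num.Theory.
Import numFieldNormedType.Exports.
Local Open Scope ring_scope.

Module Aux1.
Set Implicit Arguments. Unset Strict Implicit.
Section Alg.
Variable R : realType.

Definition Fp (m k : nat) : {poly R} :=
  \sum_(k <= j < m.+1) ('C(m, j))%:R *: ('X^j * (1 - 'X) ^+ (m - j)).

Lemma Fp_eval m k q : (Fp m k).[q] = binom_tail m k q.
Proof.
rewrite /Fp horner_sum /binom_tail; apply: eq_bigr => j _.
by rewrite hornerZ hornerM hornerXn horner_exp !hornerE.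
Qed.

Definition hh (m : nat) (q : R) (i : nat) : R :=
  (m * 'C(m.-1, i))%:R * q ^+ i * (1 - q) ^+ (m.-1 - i).

Lemma term_deriv m j q : (0 < j)%N -> (j <= m)%N ->
  (('C(m, j))%:R *: ('X^j * (1 - 'X) ^+ (m - j)) : {poly R})^`().[q]
  = hh m q j.-1 - hh m q j.
Proof.
move=> j0 jm.
rewrite derivZ derivM derivXn deriv_exp derivB derivC derivX sub0r.
rewrite hornerZ !hornerE /hh.
have e1 : (m * 'C(m.-1, j.-1) = j * 'C(m, j))%N.
  by rewrite mul_bin_diag prednK.
have e2 : (m * 'C(m.-1, j) = (m - j) * 'C(m, j))%N.
  by rewrite mul_bin_diag mul_bin_left.
rewrite e1 e2 !natrM.
have -> : (m.-1 - j.-1 = m - j)%N by lia.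
have -> : (m.-1 - j = (m - j).-1)%N by lia.
case: (m - j)%N => [|t] /=;
  rewrite !hornerMn !hornerM !hornerXn !horner_exp !hornerE; ring.
Qed.

Lemma Fp_deriv m k q : (0 < k)%N -> (k <= m)%N ->
  (Fp m k)^`().[q] = hh m q k.-1.
Proof.
move=> k0 km.
rewrite /Fp raddf_sum horner_sum.
rewrite (@telescope_sumr_eq _ _ _ (fun i => - hh m q i.-1)); first last.
- move=> j /andP[kj jm]; rewrite term_deriv /=; first by rewrite opprK addrC.
  + by lia.
  + by lia.
- by lia.
rewrite /= {1}/hh bin_small; last by lia.
by rewrite muln0 mul0r mul0r oppr0 opprK add0r.
Qed.

Lemma logconc m k a b : (0 < k)%N -> (k <= m)%N ->
  0 <= b -> b <= a -> a <= 1 ->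
  hh m a k.-1 * binom_tail m k b <= hh m b k.-1 * binom_tail m k a.
Proof.
move=> k0 km b0 ba a1.
have a0 : 0 <= a by apply: le_trans ba.
have a0' : 0 <= 1 - a by rewrite subr_ge0.
have b0' : 0 <= 1 - b by rewrite subr_ge0 (le_trans ba).
have ab' : 1 - a <= 1 - b by rewrite lerB.
rewrite /binom_tail !big_distrr /=; apply: ler_sum_nat => j /andP[kj jm].
have ej : j = (k.-1 + (j - k).+1)%N by lia.
have em : (m.-1 - k.-1 = (m - j) + (j - k))%N by lia.
rewrite /hh em.
move: (m - j)%N (j - k)%N ej => s t ej.
rewrite ej !exprD.
have key : (1 - a) ^+ t * b ^+ t.+1 <= (1 - b) ^+ t * a ^+ t.+1.
  by apply: ler_pM; rewrite ?exprn_ge0 ?lerXn2r // ?nnegrE.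
set K := (m * 'C(m.-1, k.-1))%:R.
set C := ('C(m, k.-1 + t.+1))%:R.
have K0 : 0 <= K by rewrite /K ler0n.
have C0 : 0 <= C by rewrite /C ler0n.
have com : 0 <= K * C * a ^+ k.-1 * b ^+ k.-1 * (1 - a) ^+ s * (1 - b) ^+ s.
  by rewrite !mulr_ge0 // exprn_ge0.
have := ler_wpM2l com key.
have -> : K * b ^+ k.-1 * ((1 - b) ^+ s * (1 - b) ^+ t) *
  (C * (a ^+ k.-1 * a ^+ t.+1) * (1 - a) ^+ s) =
  K * C * a ^+ k.-1 * b ^+ k.-1 * (1 - a) ^+ s * (1 - b) ^+ s *
  ((1 - b) ^+ t * a ^+ t.+1) by ring.
have -> : K * a ^+ k.-1 * ((1 - a) ^+ s * (1 - a) ^+ t) *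
  (C * (b ^+ k.-1 * b ^+ t.+1) * (1 - b) ^+ s) =
  K * C * a ^+ k.-1 * b ^+ k.-1 * (1 - a) ^+ s * (1 - b) ^+ s *
  ((1 - a) ^+ t * b ^+ t.+1) by ring.
by [].
Qed.
End Alg.
End Aux1.
Import Aux1.

Section An.
Variable R : realType.

Lemma tail_gt0 m k (q : R) : (k <= m)%N -> 0 < q -> q <= 1 -> 0 < binom_tail m k q.
Proof.
move=> km q0 q1; rewrite /binom_tail big_nat_recr //=.
apply: ltr_wpDl.
  apply: sumr_ge0 => j _; rewrite !mulr_ge0 ?exprn_ge0 ?ler0n ?subr_ge0 //; exact: ltW.
by rewrite subnn expr0 mulr1 binn mul1r exprn_gt0.
Qed.

Lemma hh_gt0 m k (q : R) : (0 < k)%N -> (k <= m)%N -> 0 < q -> q < 1 -> 0 < hh m q k.-1.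
Proof.
move=> k0 km q0 q1; rewrite /hh !mulr_gt0 ?exprn_gt0 ?subr_gt0 // ltr0n muln_gt0.
apply/andP; split; first by lia.
by rewrite bin_gt0; lia.
Qed.


Lemma tail0 m (q : R) : binom_tail m 0 q = 1.
Proof.
have := exprDn (1 - q) q m; rewrite subrK expr1n => ->.
rewrite /binom_tail big_mkord; apply: eq_bigr => j _.
by rewrite -mulr_natl; ring.
Qed.


Lemma ratio_decr (p : R) m k x y : 1/2 < p -> p < 1 -> (0 < k)%N -> (k <= m)%N ->
  0 <= x -> x < y -> y <= 1 ->
  binom_tail m k (p + (1-p)*y) / binom_tail m k ((1-p) + p*y) <
  binom_tail m k (p + (1-p)*x) / binom_tail m k ((1-p) + p*x).
Proof.
move=> hp1 hp2 k0 km x0 xy y1.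
pose A : {poly R} := p%:P + (1-p) *: 'X.
pose Bq : {poly R} := (1-p)%:P + p *: 'X.
pose P := Fp R m k \Po A.
pose Q := Fp R m k \Po Bq.
have Pe z : P.[z] = binom_tail m k (p + (1-p)*z).
  by rewrite horner_comp Fp_eval !hornerE.
have Qe z : Q.[z] = binom_tail m k ((1-p) + p*z).
  by rewrite horner_comp Fp_eval !hornerE.
have P'e z : P^`().[z] = hh m (p + (1-p)*z) k.-1 * (1-p).
  rewrite deriv_comp hornerM horner_comp Fp_deriv // derivD derivC derivZ derivX.
  by rewrite !hornerE; exact: mulr1.
have Q'e z : Q^`().[z] = hh m ((1-p) + p*z) k.-1 * p.
  rewrite deriv_comp hornerM horner_comp Fp_deriv // derivD derivC derivZ derivX.
  by rewrite !hornerE; exact: mulr1.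
have Qpos (z : R) : 0 <= z -> z <= 1 -> 0 < Q.[z].
  move=> z0 z1; rewrite Qe; apply: tail_gt0 => //; nra.
pose r := fun z => P.[z] * (Q.[z])^-1.
pose df z := P.[z] * (- (Q.[z]) ^- 2 * Q^`().[z]) + (Q.[z])^-1 * P^`().[z].
have D (z : R) : 0 <= z -> z <= 1 -> is_derive z 1 r (df z).
  move=> z0 z1.
  have hQ : Q.[z] != 0 by rewrite gt_eqF // Qpos.
  have := is_deriveM (is_derive_poly P z) (is_deriveV hQ (is_derive_poly Q z)).
  have -> : (horner P * (fun y => (Q.[y])^-1)) = r by apply/funext => w.
  by [].
have cont : {within `[x, y], continuous r}%classic.
  apply: derivable_within_continuous => z; rewrite in_itv /= => /andP[xz zy].
  by apply: (@ex_derive _ _ _ _ _ _ (df z)); apply: D; nra.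
have Dab : forall z, z \in `]x, y[ -> is_derive z 1 r (df z).
  by move=> z; rewrite in_itv /= => /andP[xz zy]; apply: D; nra.
have [c] := MVT xy Dab cont.
rewrite in_itv /= => /andP[xc cy] hmvt.
have hQc : 0 < Q.[c] by apply: Qpos; nra.
have b0 : 0 <= (1-p) + p*c by nra.
have ba : (1-p) + p*c <= p + (1-p)*c by nra.
have a1 : p + (1-p)*c <= 1 by nra.
have L := logconc k0 km b0 ba a1.
have hb : 0 < hh m ((1-p) + p*c) k.-1 by apply: hh_gt0 => //; nra.
have Fa : 0 < binom_tail m k (p + (1-p)*c) by apply: tail_gt0 => //; nra.
have N : P^`().[c] * Q.[c] - P.[c] * Q^`().[c] < 0.
  rewrite P'e Q'e Pe Qe.
  have hv := mulr_gt0 hb Fa.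
  nra.
have edf : df c = (P^`().[c] * Q.[c] - P.[c] * Q^`().[c]) / Q.[c]^+2.
  rewrite /df; field; by rewrite gt_eqF.
have dneg : df c < 0.
  by rewrite edf pmulr_llt0 // invr_gt0 exprn_gt0.
have : r y < r x by nra.
by rewrite /r -(Pe y) -(Qe y) -(Pe x) -(Qe x).
Qed.

End An.

Lemma sign_help (R : realType) (p X Y X' Y' : R) : 0 < Y -> 0 < Y' -> p < 1 ->
  (1-p) * X' - p * Y' = 0 ->
  (X' / Y' < X / Y -> 0 < (1-p) * X - p * Y) /\
  (X / Y < X' / Y' -> (1-p) * X - p * Y < 0).
Proof.
move=> Y0 Y'0 p1 h0.
have eX : X = (X / Y) * Y by rewrite divfK // gt_eqF.
have eX' : X' = (X' / Y') * Y' by rewrite divfK // gt_eqF.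
move: eX eX'; set u := X / Y; set u' := X' / Y' => eX eX'.
clearbody u u'.
rewrite eX' in h0.
have e' : (1-p) * u' = p.
  have : Y' * ((1-p) * u' - p) = 0.
    by rewrite -[RHS]h0; ring.
  by move/eqP; rewrite mulf_eq0 gt_eqF //= subr_eq0 => /eqP.
rewrite eX -{2 4}e'.
have -> : (1 - p) * (u * Y) - (1 - p) * u' * Y = Y * ((1 - p) * (u - u')) by ring.
have p0 : 0 < 1 - p by rewrite subr_gt0.
split => h.
  by rewrite !mulr_gt0 // subr_gt0.
by rewrite pmulr_rlt0 // pmulr_rlt0 // subr_lt0.
Qed.

Theorem proposition1 (R : realType) (p : R) (n B : nat)
  (hp1 : 1 / 2 < p) (hp2 : p < 1)
  (hn : (1 <= n)%N) (hB1 : (1 <= B)%N) (hB2 : (B <= n)%N)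
  (lam' : R) (hl1 : 0 < lam') (hl2 : lam' < 1)
  (h0 : (1 - p) * xlam p n B lam' - p * ylam p n B lam' = 0) :
  (forall lam : R, 0 <= lam -> lam < lam' ->
     (1 - p) * xlam p n B lam - p * ylam p n B lam > 0) /\
  (forall lam : R, lam' < lam -> lam <= 1 ->
     (1 - p) * xlam p n B lam - p * ylam p n B lam < 0).
Proof.
move: h0; rewrite /xlam /ylam.
case: (posnP (B - 1)) => [->|k0] h0.
  by move: h0; rewrite !tail0; lra.
have km : (B - 1 <= n - 1)%N by lia.
have Ypos (l : R) : 0 <= l -> l <= 1 -> 0 < binom_tail (n-1) (B-1) ((1-p) + p * l).
  by move=> l0 l1; apply: tail_gt0 => //; nra.
split => lam l0 l1.
- have [h _] := @sign_help R p (binom_tail (n-1) (B-1) (p + (1-p)*lam)) _ _ _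
     (Ypos lam l0 (ltW (lt_trans l1 hl2))) (Ypos lam' (ltW hl1) (ltW hl2)) hp2 h0.
  by apply: h; apply: ratio_decr => //; exact: ltW.
- have [_ h] := @sign_help R p (binom_tail (n-1) (B-1) (p + (1-p)*lam)) _ _ _
     (Ypos lam (ltW (lt_trans hl1 l0)) l1) (Ypos lam' (ltW hl1) (ltW hl2)) hp2 h0.
  by apply: h; apply: ratio_decr => //; exact: ltW.
Qed.
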